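(* Let $H$ be any random variable with values in $(0,1)$ with $\mu_{\log}:=E[-\log(1-H)]<\infty$ (no non-lattice assumption). Let $Q_\bullet$ be the Markov chain on $\{1,2,\dots\}$ with transition probabilities $p_{m,n}=\binom{n-1}{m-1}\mu_{n-m,m}$ for $1\le m\le n$ (and $0$ for $n<m$) and initial distribution $P(Q_0=n)=\mu_{n,0}/(n\,\mu_{\log})$, $n\ge1$. Then for every $n\ge1$, $$P(Q_k=n\text{ for some }k\ge0)=\frac{1-\mu_{0,n}}{n\,\mu_{\log}}.$$
   Context: $\mu_{i,j}:=E[H^i(1-H)^j]$. *)

(* Defs.v *)
From Stdlib Require Import Reals Lra Lia Arith.
Open Scope R_scope.

(* A Borel probability
   law on (0,1) is represented (Daniell–Stone) by its expectation
   functional on bounded functions continuous on (0,1): positive, linear,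
   normalised and sigma-smooth (monotone convergence on decreasing
   sequences). By Daniell–Stone these are exactly the Borel probability
   measures on (0,1). *)

Definition bc01 (f : R -> R) : Prop :=
  (exists B, forall x, 0 < x < 1 -> Rabs (f x) <= B) /\
  (forall x, 0 < x < 1 -> continuity_pt f x).

Record law01 := {
  Ex : (R -> R) -> R;
  Ex_ext : forall f g, (forall x, 0 < x < 1 -> f x = g x) -> Ex f = Ex g;
  Ex_lin : forall f g a b, bc01 f -> bc01 g ->
     Ex (fun x => a * f x + b * g x) = a * Ex f + b * Ex g;
  Ex_pos : forall f, bc01 f -> (forall x, 0 < x < 1 -> 0 <= f x) -> 0 <= Ex f;
  Ex_one : Ex (fun _ => 1) = 1;
  Ex_smooth : forall fs : nat -> R -> R,
     (forall k, bc01 (fs k)) ->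
     (forall k x, 0 < x < 1 -> 0 <= fs (S k) x <= fs k x) ->
     (forall x, 0 < x < 1 -> Un_cv (fun k => fs k x) 0) ->
     Un_cv (fun k => Ex (fs k)) 0
}.

Definition mu (L : law01) (i j : nat) : R := Ex L (fun x => x ^ i * (1 - x) ^ j).

(* truncated E[min(-log(1-H), M)]; E[-log(1-H)] is its (monotone) limit *)
Definition mulog_trunc (L : law01) (M : nat) : R :=
  Ex L (fun x => Rmin (- ln (1 - x)) (INR M)).

Definition trans (L : law01) (m n : nat) : R :=
  if andb (1 <=? m)%nat (m <=? n)%nat
  then C (n - 1) (m - 1) * mu L (n - m) m else 0.

Definition init (L : law01) (mulog : R) (n : nat) : R :=
  if (1 <=? n)%nat then mu L n 0 / (INR n * mulog) else 0.

Fixpoint sumR (N : nat) (g : nat -> R) : R :=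
  match N with O => 0 | S N' => sumR N' g + g (S N') end.

(* Generic chain (initial law pi, transition p) on states 1,2,...
   avoid pi p n N k y = P(Q_0,...,Q_k all in {1..N}\{n}, Q_k = y). *)
Fixpoint avoid (pi : nat -> R) (p : nat -> nat -> R) (n N k y : nat) : R :=
  if andb (andb (1 <=? y)%nat (y <=? N)%nat) (negb (y =? n)%nat) then
    match k with
    | O => pi y
    | S k' => sumR N (fun x => avoid pi p n N k' x * p x y)
    end
  else 0.

(* P(Q_0..Q_{k-1} in {1..N}\{n}, Q_k = n); as N -> oo this increases to
   P(first visit of n at time k). *)
Definition first_hit (pi : nat -> R) (p : nat -> nat -> R) (n N k : nat) : R :=
  match k with
  | O => pi n
  | S k' => sumR N (fun x => avoid pi p n N k' x * p x n)
  end.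

(* Main.v *)
Require Import Defs.
From Stdlib Require Import Reals Lra Lia Arith FunctionalExtensionality Bool.
Open Scope R_scope.

Fixpoint psum (u : nat -> R) (K : nat) : R :=
  match K with O => 0 | S K' => psum u K' + u K' end.

Lemma sumR_ext N g h : (forall x, (1 <= x <= N)%nat -> g x = h x) -> sumR N g = sumR N h.
Proof.
  induction N; simpl; intros H; auto.
  rewrite IHN, H; auto; intros; try apply H; lia.
Qed.

Lemma sumR_trunc M N g : (M <= N)%nat -> (forall x, (M < x)%nat -> g x = 0) ->
  sumR N g = sumR M g.
Proof.
  induction N; intros HM Hg.
  - replace M with 0%nat by lia; auto.
  - destruct (Nat.eq_dec M (S N)) as [->|Hne]; auto.
    simpl. rewrite IHN by (auto; lia). rewrite (Hg (S N)) by lia. ring.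
Qed.

Lemma sumR_plus N g h : sumR N (fun x => g x + h x) = sumR N g + sumR N h.
Proof. induction N; simpl; [ring|rewrite IHN; ring]. Qed.

Lemma sumR_scal N c g : sumR N (fun x => g x * c) = sumR N g * c.
Proof. induction N; simpl; [ring|rewrite IHN; ring]. Qed.

Lemma sumR_le N g h : (forall x, (1 <= x <= N)%nat -> g x <= h x) -> sumR N g <= sumR N h.
Proof.
  induction N; simpl; intros H; [lra|].
  apply Rplus_le_compat; [apply IHN; intros; apply H; lia| apply H; lia].
Qed.

Lemma sumR_nonneg N g : (forall x, 0 <= g x) -> 0 <= sumR N g.
Proof. induction N; simpl; intros H; [lra|]. pose proof (H (S N)). specialize (IHN H). lra. Qed.

Lemma psum_ext K g h : (forall k, g k = h k) -> psum g K = psum h K.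
Proof. induction K; simpl; intros; auto. rewrite IHK, H; auto. Qed.

Lemma psum_plus K g h : psum (fun k => g k + h k) K = psum g K + psum h K.
Proof. induction K; simpl; [ring|rewrite IHK; ring]. Qed.

Lemma psum_scal K c g : psum (fun k => g k * c) K = psum g K * c.
Proof. induction K; simpl; [ring|rewrite IHK; ring]. Qed.

Lemma psum_sumR M K g :
  psum (fun k => sumR M (g k)) K = sumR M (fun x => psum (fun k => g k x) K).
Proof.
  induction K; simpl.
  - induction M; simpl; auto. rewrite <- IHM; ring.
  - rewrite IHK. rewrite <- sumR_plus. reflexivity.
Qed.

Lemma psum_shift u K : psum u (S K) = u 0%nat + psum (fun k => u (S k)) K.
Proof. induction K; simpl in *; [ring|rewrite IHK; ring]. Qed.

Lemma sum_f_psum f K : sum_f_R0 f K = psum f (S K).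
Proof. induction K; simpl in *; [ring|rewrite IHK; ring]. Qed.

Lemma CV_const c : Un_cv (fun _ => c) c.
Proof. intros e He; exists 0%nat; intros; unfold Rdist; rewrite Rminus_diag, Rabs_R0; lra. Qed.

Lemma CV_S u l : Un_cv u l -> Un_cv (fun K => u (S K)) l.
Proof. intros H e He; destruct (H e He) as [N HN]; exists N; intros; apply HN; lia. Qed.

Lemma CV_sumR M (u : nat -> nat -> R) l :
  (forall x, (1 <= x <= M)%nat -> Un_cv (fun K => u K x) (l x)) ->
  Un_cv (fun K => sumR M (u K)) (sumR M l).
Proof.
  induction M; simpl; intros H.
  - apply CV_const.
  - apply CV_plus; [apply IHM; intros; apply H; lia| apply H; lia].
Qed.

Section Gen.
Variables (q : nat -> R) (p : nat -> nat -> R) (n : nat).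
Hypothesis Hq : forall y, 0 <= q y.
Hypothesis Hp : forall x y, 0 <= p x y.
Hypothesis Htri : forall x y, (y < x)%nat -> p x y = 0.

Lemma avoid_nonneg N k y : 0 <= avoid q p n N k y.
Proof.
  revert y; induction k; intros y; simpl;
  destruct (_ && _)%bool; try lra; auto.
  apply sumR_nonneg; intros; apply Rmult_le_pos; auto.
Qed.

Lemma cond_true y N : (1 <= y <= N)%nat -> y <> n ->
  ((1 <=? y)%nat && (y <=? N)%nat && negb (y =? n)%nat)%bool = true.
Proof.
  intros H1 H2. apply andb_true_intro; split; [apply andb_true_intro; split|].
  - apply Nat.leb_le; lia.
  - apply Nat.leb_le; lia.
  - rewrite (proj2 (Nat.eqb_neq y n) H2); reflexivity.
Qed.

Lemma avoid_0 N y : avoid q p n N 0 y =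
  if ((1 <=? y)%nat && (y <=? N)%nat && negb (y =? n)%nat)%bool then q y else 0.
Proof. reflexivity. Qed.
Lemma avoid_S N k y : avoid q p n N (S k) y =
  if ((1 <=? y)%nat && (y <=? N)%nat && negb (y =? n)%nat)%bool then
   sumR N (fun x => avoid q p n N k x * p x y) else 0.
Proof. reflexivity. Qed.

Lemma avoid_N N k y : (n <= N)%nat -> (y <= n)%nat ->
  avoid q p n N k y = avoid q p n n k y.
Proof.
  intros HN. revert y; induction k; intros y Hy.
  - rewrite !avoid_0. destruct (Nat.eq_dec y 0) as [->|H0]; [reflexivity|].
    destruct (Nat.eq_dec y n) as [->|Hn].
    + rewrite Nat.eqb_refl, !andb_false_r; reflexivity.
    + rewrite !cond_true by lia. reflexivity.
  - rewrite !avoid_S. destruct (Nat.eq_dec y 0) as [->|H0]; [reflexivity|].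
    destruct (Nat.eq_dec y n) as [->|Hn].
    + rewrite Nat.eqb_refl, !andb_false_r; reflexivity.
    + rewrite !cond_true by lia.
      rewrite (sumR_trunc y N) by (try lia; intros; rewrite Htri by lia; ring).
      rewrite (sumR_trunc y n) by (try lia; intros; rewrite Htri by lia; ring).
      apply sumR_ext; intros; rewrite IHk by lia; reflexivity.
Qed.

Lemma first_hit_N N k : (n <= N)%nat -> first_hit q p n N k = first_hit q p n n k.
Proof.
  intros HN; destruct k; simpl; auto.
  rewrite (sumR_trunc n N) by (try lia; intros; rewrite Htri by lia; ring).
  apply sumR_ext; intros; rewrite avoid_N by lia; reflexivity.
Qed.

Definition a k y := avoid q p n n k y.
Definition Sm K y := psum (fun k => a k y) K.

Lemma a_rec k y' : (S y' < n)%nat ->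
  a (S k) (S y') = sumR y' (fun x => a k x * p x (S y')) + a k (S y') * p (S y') (S y').
Proof.
  intros H. unfold a. rewrite avoid_S, cond_true by lia.
  rewrite (sumR_trunc (S y') n) by (try lia; intros; rewrite Htri by lia; ring).
  reflexivity.
Qed.

Lemma a_0 y : (1 <= y < n)%nat -> a 0 y = q y.
Proof. intros H; unfold a; rewrite avoid_0, cond_true by lia; reflexivity. Qed.

Lemma Sm_rec K y' : (S y' < n)%nat ->
  Sm (S K) (S y') = q (S y') + sumR y' (fun x => Sm K x * p x (S y'))
     + Sm K (S y') * p (S y') (S y').
Proof.
  intros H. unfold Sm. rewrite psum_shift, a_0 by lia.
  rewrite (psum_ext K _ _ (fun k => a_rec k y' H)).
  rewrite psum_plus, psum_scal.
  rewrite (psum_sumR y' K (fun k x => a k x * p x (S y'))).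
  rewrite Rplus_assoc. f_equal. f_equal. apply sumR_ext; intros.
  rewrite psum_scal; reflexivity.
Qed.

Lemma Sm_growing y : Un_growing (fun K => Sm K y).
Proof. intros K; unfold Sm; simpl. pose proof (avoid_nonneg n K y). unfold a. lra. Qed.

Hypothesis Hdiag : forall y, (1 <= y < n)%nat -> p y y < 1.
Variable G : nat -> R.
Hypothesis HG : forall y', (S y' < n)%nat ->
  G (S y') * (1 - p (S y') (S y')) = q (S y') + sumR y' (fun x => G x * p x (S y')).

Lemma Sm_conv : forall y, (1 <= y < n)%nat -> Un_cv (fun K => Sm K y) (G y).
Proof.
  assert (forall m y, (1 <= y <= m)%nat -> (y < n)%nat -> Un_cv (fun K => Sm K y) (G y)).
  2:{ intros y Hy; apply (H y); lia. }
  induction m; intros y Hy Hyn; [lia|].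
  destruct y as [|y']; [lia|].
  assert (IH : forall x, (1 <= x <= y')%nat -> Un_cv (fun K => Sm K x) (G x))
    by (intros; apply IHm; lia).
  set (B := sumR y' (fun x => G x * p x (S y'))).
  set (pp := p (S y') (S y')).
  assert (Hpp : pp < 1) by (apply Hdiag; lia).
  assert (HB : forall K, sumR y' (fun x => Sm K x * p x (S y')) <= B).
  { intros K; apply sumR_le; intros x Hx. apply Rmult_le_compat_r; auto.
    apply (growing_ineq (fun K => Sm K x)); [apply Sm_growing| apply IH; auto]. }
  assert (Hub : has_ub (fun K => Sm K (S y'))).
  { exists ((q (S y') + B) / (1 - pp)). intros z [K ->].
    pose proof (Sm_rec K y' Hyn) as R1. pose proof (Sm_growing (S y') K) as R2.
    pose proof (HB K). fold pp in R1.
    apply (Rmult_le_reg_r (1 - pp)); [lra|]. unfold Rdiv.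
    rewrite Rmult_assoc, Rinv_l by lra. simpl in R2. lra. }
  destruct (growing_cv _ (Sm_growing (S y')) Hub) as [Lm HL].
  assert (E : Lm = q (S y') + B + Lm * pp).
  { apply (UL_sequence (fun K => Sm (S K) (S y'))); [apply CV_S; auto|].
    apply (Un_cv_ext (fun K => q (S y') + sumR y' (fun x => Sm K x * p x (S y'))
     + Sm K (S y') * pp)).
    - intros K; rewrite Sm_rec by auto; reflexivity.
    - apply CV_plus; [apply CV_plus; [apply CV_const|]|].
      + apply CV_sumR; intros x Hx. apply CV_mult; [apply IH; auto|apply CV_const].
      + apply CV_mult; [auto|apply CV_const]. }
  assert (Lm = G (S y')).
  { pose proof (HG y' Hyn) as HG1. fold pp B in HG1.
    apply (Rmult_eq_reg_r (1 - pp)); [|lra]. lra. }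
  subst; auto.
Qed.

Lemma fh_S k n' : n = S n' ->
  first_hit q p n n (S k) = sumR n' (fun x => a k x * p x n).
Proof.
  intros Hn. simpl first_hit. rewrite Hn at 1. simpl sumR.
  replace (avoid q p n n k (S n')) with 0.
  - rewrite Rmult_0_l, Rplus_0_r; reflexivity.
  - destruct k; [rewrite avoid_0|rewrite avoid_S]; rewrite <- Hn, Nat.eqb_refl, !andb_false_r; reflexivity.
Qed.

Lemma total_conv n' : n = S n' ->
  Un_cv (sum_f_R0 (fun k => first_hit q p n n k))
        (q n + sumR n' (fun x => G x * p x n)).
Proof.
  intros Hn.
  apply (Un_cv_ext (fun K => q n + sumR n' (fun x => Sm K x * p x n))).
  - intros K. rewrite sum_f_psum, psum_shift. simpl first_hit at 1. f_equal.
    rewrite (psum_ext K _ _ (fun k => fh_S k n' Hn)).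
    rewrite psum_sumR. apply sumR_ext; intros; unfold Sm; rewrite psum_scal; reflexivity.
  - apply CV_plus; [apply CV_const|]. apply CV_sumR; intros x Hx.
    apply CV_mult; [apply Sm_conv; lia|apply CV_const].
Qed.

End Gen.

Lemma cont_lin f g a b x : continuity_pt f x -> continuity_pt g x ->
  continuity_pt (fun y => a * f y + b * g y) x.
Proof.
  intros Hf Hg.
  exact (continuity_pt_plus _ _ _ (continuity_pt_scal _ a _ Hf) (continuity_pt_scal _ b _ Hg)).
Qed.

Lemma cont_ext f g x : continuity_pt f x -> (forall y, f y = g y) -> continuity_pt g x.
Proof. intros H E. replace g with f; auto. apply functional_extensionality; auto. Qed.

Lemma cont_const c x : continuity_pt (fun _ => c) x.
Proof. apply continuity_pt_const; intros u v; reflexivity. Qed.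

Lemma cont_mul f g x : continuity_pt f x -> continuity_pt g x ->
  continuity_pt (fun y => f y * g y) x.
Proof. intros Hf Hg. exact (continuity_pt_mult _ _ _ Hf Hg). Qed.

Lemma cont_pow f i x : continuity_pt f x -> continuity_pt (fun y => f y ^ i) x.
Proof.
  intros Hf; induction i; simpl.
  - apply cont_const.
  - apply cont_mul; auto.
Qed.

Lemma cont_id x : continuity_pt (fun y => y) x.
Proof. exact (derivable_continuous_pt _ _ (derivable_pt_id x)). Qed.

Lemma bc01_const c : bc01 (fun _ => c).
Proof. split; [exists (Rabs c); intros; lra| intros; apply cont_const]. Qed.

Lemma bc01_lin f g a b : bc01 f -> bc01 g -> bc01 (fun y => a * f y + b * g y).
Proof.
  intros [[B1 H1] C1] [[B2 H2] C2]. split.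
  - exists (Rabs a * B1 + Rabs b * B2). intros x Hx.
    eapply Rle_trans; [apply Rabs_triang|]. rewrite !Rabs_mult.
    apply Rplus_le_compat; apply Rmult_le_compat_l; auto; apply Rabs_pos.
  - intros; apply cont_lin; auto.
Qed.

Lemma pow01 x i : 0 <= x <= 1 -> 0 <= x ^ i <= 1.
Proof.
  intros H; induction i; simpl; [lra|].
  split; [apply Rmult_le_pos; lra|].
  replace 1 with (1 * 1) by ring. apply Rmult_le_compat; lra.
Qed.

Lemma bc01_poly i j : bc01 (fun x => x ^ i * (1 - x) ^ j).
Proof.
  split.
  - exists 1. intros x Hx. pose proof (pow01 x i ltac:(lra)) as A. pose proof (pow01 (1 - x) j ltac:(lra)) as B.
    rewrite Rabs_right.
    + apply Rle_trans with (1 * 1); [apply Rmult_le_compat; lra|lra].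
    + apply Rle_ge, Rmult_le_pos; lra.
  - intros x _. apply cont_mul; apply cont_pow; [apply cont_id|].
    exact (continuity_pt_minus _ _ _ (cont_const 1 x) (cont_id x)).
Qed.

Section L.
Variable L : law01.

Lemma Ex_scal f a : bc01 f -> Ex L (fun x => a * f x) = a * Ex L f.
Proof.
  intros Hf. transitivity (Ex L (fun x => a * f x + 0 * f x)).
  - apply Ex_ext; intros; ring.
  - rewrite Ex_lin by auto; ring.
Qed.

Lemma Ex_mono f g : bc01 f -> bc01 g -> (forall x, 0 < x < 1 -> f x <= g x) ->
  Ex L f <= Ex L g.
Proof.
  intros Hf Hg H.
  assert (0 <= Ex L (fun x => 1 * g x + (-1) * f x)).
  { apply Ex_pos; [apply bc01_lin; auto|]. intros x Hx; specialize (H x Hx); lra. }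
  rewrite Ex_lin in H0 by auto. lra.
Qed.

Lemma Ex_strict f : bc01 f -> (forall x, 0 < x < 1 -> 0 < f x) -> 0 < Ex L f.
Proof.
  intros Hf Hpos. destruct (Rlt_or_le 0 (Ex L f)) as [|Hle]; auto. exfalso.
  set (fs := fun (k : nat) x => / (1 + INR k * f x)).
  assert (Hb : forall k, bc01 (fs k)).
  { intros k. destruct Hf as [[B HB] Cf]. split.
    - exists 1. intros x Hx. specialize (Hpos x Hx). pose proof (pos_INR k).
      unfold fs. assert (1 <= 1 + INR k * f x) by nra.
      rewrite Rabs_right.
      + rewrite <- Rinv_1. apply Rinv_le_contravar; lra.
      + apply Rle_ge, Rlt_le, Rinv_0_lt_compat; lra.
    - intros x Hx. specialize (Hpos x Hx). pose proof (pos_INR k).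
      apply (cont_ext (inv_fct (fun y => 1 * 1 + INR k * f y))).
      + exact (continuity_pt_inv _ _ (cont_lin (fun _ => 1) f 1 (INR k) x (cont_const 1 x) (Cf x Hx))
         ltac:(simpl; nra)).
      + intros y; unfold fs, inv_fct; f_equal; ring. }
  assert (Hcv : Un_cv (fun k => Ex L (fs k)) 0).
  { apply Ex_smooth; auto.
    - intros k x Hx. specialize (Hpos x Hx). pose proof (pos_INR k). unfold fs.
      rewrite S_INR. split.
      + apply Rlt_le, Rinv_0_lt_compat; nra.
      + apply Rinv_le_contravar; nra.
    - intros x Hx e He. specialize (Hpos x Hx).
      destruct (archimed_cor1 (e * f x)) as [N [HN HN0]]; [nra|].
      exists N. intros k Hk. unfold Rdist, fs. rewrite Rminus_0_r.
      assert (HNk : INR N <= INR k) by (apply le_INR; lia).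
      assert (0 < INR N) by (apply lt_0_INR; lia).
      rewrite Rabs_right by (apply Rle_ge, Rlt_le, Rinv_0_lt_compat; nra).
      apply Rle_lt_trans with (/ (INR N * f x)).
      + apply Rinv_le_contravar; nra.
      + rewrite Rinv_mult. apply (Rmult_lt_reg_r (f x)); auto.
        rewrite Rmult_assoc, Rinv_l by lra. nra. }
  assert (Hge : forall k, 1 <= Ex L (fs k)).
  { intros k. rewrite <- (Ex_one L).
    apply Rle_trans with (Ex L (fun x => 1 * fs k x + INR k * f x)).
    - apply Ex_mono; [apply bc01_const|apply bc01_lin; auto|].
      intros x Hx. specialize (Hpos x Hx). pose proof (pos_INR k). unfold fs.
      assert (0 < 1 + INR k * f x) by nra.
      assert (/ (1 + INR k * f x) * (1 + INR k * f x) = 1) by (field; lra).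
      assert (0 < / (1 + INR k * f x)) by (apply Rinv_0_lt_compat; lra).
      nra.
    - rewrite Ex_lin by auto. pose proof (pos_INR k). nra. }
  destruct (Hcv (1/2) ltac:(lra)) as [N HN]. specialize (HN N (le_n _)).
  specialize (Hge N). unfold Rdist in HN. rewrite Rminus_0_r in HN.
  apply Rabs_def2 in HN. lra.
Qed.

Lemma mu_nonneg i j : 0 <= mu L i j.
Proof.
  apply Ex_pos; [apply bc01_poly|]. intros x Hx.
  apply Rmult_le_pos; apply pow_le; lra.
Qed.

Lemma mu_0_lt y : (1 <= y)%nat -> mu L 0 y < 1.
Proof.
  intros Hy.
  assert (0 < Ex L (fun x => 1 * 1 + (-1) * (x ^ 0 * (1 - x) ^ y))).
  { apply Ex_strict; [apply bc01_lin; [apply bc01_const|apply bc01_poly]|].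
    intros x Hx. simpl. pose proof (pow_lt_1_compat (1 - x) y ltac:(lra) ltac:(lia)). lra. }
  rewrite Ex_lin in H by (apply bc01_const || apply bc01_poly).
  rewrite Ex_one in H. unfold mu. lra.
Qed.

Lemma bc01_ext f g : bc01 f -> (forall x, f x = g x) -> bc01 g.
Proof. intros H E. replace g with f; auto. apply functional_extensionality; auto. Qed.

Lemma bc01_sum (g : nat -> R -> R) (c : nat -> R) M :
  (forall i, bc01 (g i)) -> bc01 (fun x => sum_f_R0 (fun i => c i * g i x) M).
Proof.
  intros Hg; induction M; simpl.
  - apply (bc01_ext _ _ (bc01_lin (g 0%nat) (g 0%nat) (c 0%nat) 0 (Hg _) (Hg _))).
    intros; ring.
  - apply (bc01_ext _ _ (bc01_lin _ _ 1 (c (S M)) IHM (Hg (S M)))).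
    intros; ring.
Qed.

Lemma Ex_sum (g : nat -> R -> R) (c : nat -> R) M :
  (forall i, bc01 (g i)) ->
  Ex L (fun x => sum_f_R0 (fun i => c i * g i x) M) = sum_f_R0 (fun i => c i * Ex L (g i)) M.
Proof.
  intros Hg; induction M; simpl.
  - apply Ex_scal; auto.
  - rewrite <- IHM. rewrite <- (Rmult_1_l (Ex L (fun x => sum_f_R0 _ M))).
    rewrite <- Ex_lin by (auto; apply bc01_sum; auto). apply Ex_ext; intros; ring.
Qed.
End L.

Lemma C_rec a b : (b <= a)%nat -> C (S a) (S b) = INR (S a) / INR (S b) * C a b.
Proof.
  intros H. unfold C. simpl (S a - S b)%nat. rewrite !fact_simpl, !mult_INR.
  pose proof (INR_fact_neq_0 a). pose proof (INR_fact_neq_0 b).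
  pose proof (INR_fact_neq_0 (a - b)). pose proof (S_INR b). pose proof (pos_INR b).
  field; repeat split; auto; lra.
Qed.

Lemma C_0 a : C a 0 = 1.
Proof. unfold C. rewrite Nat.sub_0_r. simpl. pose proof (INR_fact_neq_0 a). field; auto. Qed.

Lemma C_diag a : C a a = 1.
Proof. unfold C. rewrite Nat.sub_diag. simpl. pose proof (INR_fact_neq_0 a). field; auto. Qed.

Lemma sum_f_sumR f N : sum_f_R0 f N = f 0%nat + sumR N f.
Proof. induction N; simpl; [ring|rewrite IHN; ring]. Qed.

Lemma sumR_scal_l N c g : sumR N (fun x => c * g x) = c * sumR N g.
Proof. induction N; simpl; [ring|rewrite IHN; ring]. Qed.

Lemma sumR_S N g : sumR (S N) g = sumR N g + g (S N).
Proof. reflexivity. Qed.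

Lemma ident (L : law01) y' :
  1 - mu L 0 (S y') = mu L (S y') 0 +
    sumR y' (fun x => INR (S y') / INR x * C y' (x - 1) * mu L (S y' - x) x).
Proof.
  assert (E : 1 = sum_f_R0 (fun i => C (S y') i * mu L (S y' - i) i) (S y')).
  { rewrite <- (Ex_one L) at 1. unfold mu.
    rewrite <- (Ex_sum L (fun i x => x ^ (S y' - i) * (1 - x) ^ i) (fun i => C (S y') i)).
    - apply Ex_ext; intros x _. transitivity (((1 - x) + x) ^ (S y')).
      { replace (1 - x + x) with 1 by ring. symmetry; apply pow1. }
      rewrite binomial. apply sum_eq; intros. ring.
    - intros; apply bc01_poly. }
  rewrite sum_f_sumR, sumR_S in E. rewrite C_0, C_diag, Nat.sub_diag, Nat.sub_0_r in E.
  rewrite E.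
  assert (sumR y' (fun i => C (S y') i * mu L (S y' - i) i) =
          sumR y' (fun x => INR (S y') / INR x * C y' (x - 1) * mu L (S y' - x) x)).
  { apply sumR_ext; intros x Hx. destruct x as [|x']; [lia|].
    rewrite C_rec by lia. simpl (S x' - 1)%nat. rewrite Nat.sub_0_r. ring. }
  rewrite H. ring.
Qed.

Lemma trans_eq L m k : (1 <= m <= k)%nat -> trans L m k = C (k - 1) (m - 1) * mu L (k - m) m.
Proof.
  intros H. unfold trans. rewrite (proj2 (Nat.leb_le 1 m)) by lia.
  rewrite (proj2 (Nat.leb_le m k)) by lia. reflexivity.
Qed.

Definition qq L (y : nat) : R := if (1 <=? y)%nat then mu L y 0 / INR y else 0.

Lemma HGfull L y' :
  / INR (S y') * (1 - trans L (S y') (S y')) =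
  qq L (S y') + sumR y' (fun x => / INR x * trans L x (S y')).
Proof.
  rewrite trans_eq by lia. simpl (S y' - 1)%nat. rewrite Nat.sub_0_r, Nat.sub_diag, C_diag.
  rewrite Rmult_1_l, ident. unfold qq. simpl (1 <=? S y')%nat.
  rewrite Rmult_plus_distr_l, <- sumR_scal_l. unfold Rdiv at 2. rewrite Rmult_comm. f_equal.
  apply sumR_ext; intros x Hx. rewrite trans_eq by lia. simpl (S y' - 1)%nat. rewrite Nat.sub_0_r.
  assert (INR x <> 0) by (apply not_0_INR; lia).
  pose proof (pos_INR y'). rewrite S_INR. field. split; auto; lra.
Qed.

Lemma avoid_scale q p n N k y c :
  avoid (fun y => c * q y) p n N k y = c * avoid q p n N k y.
Proof.
  revert y; induction k; intros y; [rewrite !avoid_0|rewrite !avoid_S];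
  destruct (_ && _)%bool; try ring.
  rewrite <- sumR_scal_l. apply sumR_ext; intros; rewrite IHk; ring.
Qed.

Lemma fh_scale q p n N k c :
  first_hit (fun y => c * q y) p n N k = c * first_hit q p n N k.
Proof.
  destruct k; simpl; auto.
  rewrite <- sumR_scal_l. apply sumR_ext; intros; rewrite avoid_scale; ring.
Qed.


Lemma trans_nonneg L x y : 0 <= trans L x y.
Proof.
  unfold trans. destruct (_ && _)%bool; [|lra].
  apply Rmult_le_pos; [|apply mu_nonneg].
  unfold C. apply Rmult_le_pos; [apply pos_INR|].
  apply Rlt_le, Rinv_0_lt_compat, Rmult_lt_0_compat; apply INR_fact_lt_0.
Qed.

Lemma trans_tri L x y : (y < x)%nat -> trans L x y = 0.
Proof.
  intros H. unfold trans. rewrite (proj2 (Nat.leb_gt x y)) by lia.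
  rewrite andb_false_r. reflexivity.
Qed.

Lemma qq_nonneg L y : 0 <= qq L y.
Proof.
  unfold qq. destruct (1 <=? y)%nat eqn:E; [|lra].
  apply Nat.leb_le in E. unfold Rdiv. apply Rmult_le_pos; [apply mu_nonneg|].
  apply Rlt_le, Rinv_0_lt_compat, lt_0_INR; lia.
Qed.

Lemma trans_diag L y : (1 <= y)%nat -> trans L y y < 1.
Proof.
  intros H. rewrite trans_eq by lia. rewrite Nat.sub_diag, C_diag, Rmult_1_l.
  apply mu_0_lt; auto.
Qed.

Theorem mainTheorem12 :
  forall (L : law01) (mulog : R),
    Un_cv (mulog_trunc L) mulog ->
    forall n : nat, (1 <= n)%nat ->
      exists f : nat -> R,
        (forall k, Un_cv (fun N => first_hit (init L mulog) (trans L) n N k) (f k)) /\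
        infinite_sum f ((1 - mu L 0 n) / (INR n * mulog)).
Proof.
  intros L mulog _ n Hn.
  set (c := / mulog).
  assert (Hinit : init L mulog = fun y => c * qq L y).
  { apply functional_extensionality; intros y. unfold init, qq, c.
    destruct (1 <=? y)%nat; [unfold Rdiv; rewrite Rinv_mult; ring|ring]. }
  rewrite Hinit.
  exists (fun k => c * first_hit (qq L) (trans L) n n k). split.
  - intros k e He. exists n. intros N HN. rewrite fh_scale, first_hit_N by (auto; apply trans_tri).
    unfold Rdist. rewrite Rminus_diag, Rabs_R0; lra.
  - destruct n as [|n']; [lia|].
    assert (Hc : Un_cv (sum_f_R0 (fun k => first_hit (qq L) (trans L) (S n') (S n') k))
       (qq L (S n') + sumR n' (fun x => / INR x * trans L x (S n')))).
    { apply total_conv; auto.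
      - apply qq_nonneg.
      - apply trans_nonneg.
      - apply trans_tri.
      - intros; apply trans_diag; lia.
      - intros y' _. apply HGfull. }
    rewrite <- HGfull in Hc.
    intros e He.
    destruct (CV_mult _ _ _ _ (CV_const c) Hc e He) as [N HN].
    exists N; intros K HK. specialize (HN K HK).
    replace (sum_f_R0 (fun k => c * first_hit (qq L) (trans L) (S n') (S n') k) K)
      with (c * sum_f_R0 (fun k => first_hit (qq L) (trans L) (S n') (S n') k) K).
    + replace ((1 - mu L 0 (S n')) / (INR (S n') * mulog))
        with (c * (/ INR (S n') * (1 - trans L (S n') (S n')))); auto.
      rewrite trans_eq by lia. rewrite Nat.sub_diag, C_diag, Rmult_1_l.
      unfold c, Rdiv. rewrite Rinv_mult. ring.
    + clear. induction K; simpl; [ring|rewrite <- IHK; ring].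
Qed.
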